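(* Let $\mathbb{K}$ be a field, $R=\mathbb{K}\langle x,y\rangle/(xy-1)$, and let $I=\langle 1-yx\rangle$ be the socle of $R$. Let $H=\Sigma\oplus Rp(x)$ be a left ideal of $R$, where $p(x)\in\mathbb{K}[x]$ and $\Sigma\subseteq I$ is a left ideal. If $p(x)\neq 0$, then $H$ is finitely generated as a left $R$-module and $\Sigma$ has finite length. In particular, every left ideal of $R$ is either semisimple or finitely generated.
   Context: $R$ has $\mathbb{K}$-basis $\{y^ix^j: i,j\ge 0\}$; $I=\bigoplus_{n\ge1}Rf_n$ with $f_n=y^{n-1}x^{n-1}-y^nx^n$, each $Rf_n$ a simple left module isomorphic to $Rf_1$. *)

(* Defs.v *)
From HB Require Import structures.
From mathcomp Require Import all_boot all_algebra.
Set Implicit Arguments. Unset Strict Implicit. Unset Printing Implicit Defensive.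
Import GRing.Theory.
Local Open Scope ring_scope.

Section Jacobson.
Variables (K : fieldType) (R : algType K).

Definition jacobson_basis (x y : R) : Prop :=
  (forall r : R, exists (n : nat) (c : nat -> nat -> K),
      r = \sum_(i < n) \sum_(j < n) c i j *: (y ^+ i * x ^+ j)) /\
  (forall (n : nat) (c : nat -> nat -> K),
      \sum_(i < n) \sum_(j < n) c i j *: (y ^+ i * x ^+ j) = 0 ->
      forall i j, (i < n)%N -> (j < n)%N -> c i j = 0).

Definition subsetR (A B : R -> Prop) : Prop := forall a, A a -> B a.
Definition eqsetR (A B : R -> Prop) : Prop := forall a, A a <-> B a.
Definition zeroset : R -> Prop := fun a => a = 0.

Definition is_left_ideal (M : R -> Prop) : Prop :=
  M 0 /\ (forall a b, M a -> M b -> M (a + b)) /\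
  (forall r a, M a -> M (r * a)).

Definition idealI (x y : R) : R -> Prop := fun r =>
  exists (n : nat) (a b : 'I_n -> R),
    r = \sum_(k < n) a k * (1 - y * x) * b k.

Definition peval (p : {poly K}) (x : R) : R := (map_poly (in_alg R) p).[x].
Definition principal (a : R) : R -> Prop := fun h => exists r, h = r * a.

Definition sumset (A B : R -> Prop) : R -> Prop :=
  fun h => exists a b, A a /\ B b /\ h = a + b.

Definition fin_gen (M : R -> Prop) : Prop :=
  exists (n : nat) (g : 'I_n -> R), (forall i, M (g i)) /\
    forall m, M m -> exists c : 'I_n -> R, m = \sum_(i < n) c i * g i.

Definition simple_lsub (S : R -> Prop) : Prop :=
  is_left_ideal S /\ (exists s, S s /\ s <> 0) /\
  forall T, is_left_ideal T -> subsetR T S -> eqsetR T zeroset \/ eqsetR T S.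

(* Finite length: existence of a composition series
   0 = C_0 < C_1 < ... < C_n = M with simple successive quotients. *)
Definition finite_length (M : R -> Prop) : Prop :=
  exists (n : nat) (C : nat -> R -> Prop),
    eqsetR (C 0%N) zeroset /\ eqsetR (C n) M /\
    (forall i, is_left_ideal (C i)) /\
    forall i, (i < n)%N ->
      subsetR (C i) (C i.+1) /\ ~ eqsetR (C i) (C i.+1) /\
      forall T, is_left_ideal T -> subsetR (C i) T -> subsetR T (C i.+1) ->
        eqsetR T (C i) \/ eqsetR T (C i.+1).

Definition semisimple (M : R -> Prop) : Prop :=
  forall m, M m -> exists (n : nat) (S : 'I_n -> R -> Prop) (s : 'I_n -> R),
    (forall i, simple_lsub (S i) /\ subsetR (S i) M /\ S i (s i)) /\
    m = \sum_(i < n) s i.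

End Jacobson.

(* Main.v *)
Require Import Defs.
From HB Require Import structures.
From mathcomp Require Import all_boot all_algebra.
From Stdlib Require Import Classical.
Set Implicit Arguments. Unset Strict Implicit. Unset Printing Implicit Defensive.
Import GRing.Theory.
Local Open Scope ring_scope.

Definition eJ (K : fieldType) (R : algType K) (x y : R) : R := 1 - y * x.

Lemma pevalE (K : fieldType) (R : algType K) (p : {poly K}) (x : R) :
  peval p x = horner_alg x p.
Proof. by []. Qed.

Lemma peval_mul (K : fieldType) (R : algType K) (p q : {poly K}) (x : R) :
  peval (p * q) x = peval p x * peval q x.
Proof. by rewrite !pevalE rmorphM. Qed.

Lemma peval_add (K : fieldType) (R : algType K) (p q : {poly K}) (x : R) :
  peval (p + q) x = peval p x + peval q x.
Proof. by rewrite !pevalE rmorphD. Qed.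

Lemma peval_sub (K : fieldType) (R : algType K) (p q : {poly K}) (x : R) :
  peval (p - q) x = peval p x - peval q x.
Proof. by rewrite !pevalE rmorphB. Qed.

Lemma peval_scale (K : fieldType) (R : algType K) (c : K) (p : {poly K}) (x : R) :
  peval (c *: p) x = c *: peval p x.
Proof. by rewrite -mul_polyC peval_mul pevalE horner_algC mulr_algl. Qed.

Lemma peval0 (K : fieldType) (R : algType K) (x : R) : peval 0 x = 0.
Proof. by rewrite pevalE rmorph0. Qed.

Lemma peval_sum (K : fieldType) (R : algType K) n (F : 'I_n -> {poly K}) (x : R) :
  peval (\sum_(i < n) F i) x = \sum_(i < n) peval (F i) x.
Proof. by rewrite pevalE rmorph_sum. Qed.

Lemma pevalXn (K : fieldType) (R : algType K) k (x : R) : peval 'X^k x = x ^+ k.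
Proof. by rewrite pevalE rmorphXn /= horner_algX. Qed.

Lemma xe (K : fieldType) (R : algType K) (x y : R) : x * y = 1 -> x * eJ x y = 0.
Proof. by move=> h; rewrite /eJ mulrBr mulr1 mulrA h mul1r subrr. Qed.

Lemma ey (K : fieldType) (R : algType K) (x y : R) : x * y = 1 -> eJ x y * y = 0.
Proof. by move=> h; rewrite /eJ mulrBl mul1r -mulrA h mulr1 subrr. Qed.

Lemma eyn (K : fieldType) (R : algType K) (x y : R) n : x * y = 1 -> eJ x y * y ^+ n.+1 = 0.
Proof. by move=> h; rewrite exprS mulrA ey // mul0r. Qed.

Lemma xne (K : fieldType) (R : algType K) (x y : R) n : x * y = 1 -> x ^+ n.+1 * eJ x y = 0.
Proof. by move=> h; rewrite exprSr -mulrA xe // mulr0. Qed.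

Lemma ee (K : fieldType) (R : algType K) (x y : R) : x * y = 1 -> eJ x y * eJ x y = eJ x y.
Proof.
move=> h; rewrite {1}/eJ mulrBl mul1r -mulrA xe // mulr0 subr0 //.
Qed.

Lemma xny (K : fieldType) (R : algType K) (x y : R) n i : x * y = 1 -> (i <= n)%N ->
  x ^+ n * y ^+ i = x ^+ (n - i).
Proof.
move=> h; elim: i n => [|i IH] n hi; first by rewrite expr0 mulr1 subn0.
case: n hi => [//|n] hi.
by rewrite [x ^+ _]exprSr [y ^+ _]exprS -mulrA (mulrA x) h mul1r subSS IH.
Qed.

Lemma decomp (K : fieldType) (R : algType K) (x y : R) M t : x * y = 1 ->
  t = y ^+ M * (x ^+ M * t) + \sum_(i < M) y ^+ i * (eJ x y * (x ^+ i * t)).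
Proof.
move=> h; elim: M => [|M IH]; first by rewrite big_ord0 addr0 !expr0 !mul1r.
rewrite big_ord_recr /= {1}IH addrC addrA; congr (_ + _).
rewrite addrC /eJ. idtac.
rewrite [y ^+ M.+1]exprSr [x ^+ M.+1]exprS -!mulrA -mulrDr; congr (_ * _).
by rewrite mulrBl mul1r [y * (x * _)]mulrA subrK.
Qed.

Lemma pevalC (K : fieldType) (R : algType K) (c : K) (x : R) : peval c%:P x = c%:A.
Proof. by rewrite pevalE horner_algC. Qed.

Lemma pevalX (K : fieldType) (R : algType K) (x : R) : peval 'X x = x.
Proof. by rewrite pevalE horner_algX. Qed.

Lemma peval_e (K : fieldType) (R : algType K) (x y : R) (q : {poly K}) : x * y = 1 ->
  peval q x * eJ x y = q`_0 *: eJ x y.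
Proof.
move=> h; elim/poly_ind: q => [|p c IH]; first by rewrite peval0 mul0r coef0 scale0r.
rewrite peval_add peval_mul pevalX pevalC mulrDl -mulrA xe // mulr0 add0r.
by rewrite coefD coefMX coefC /= add0r mulr_algl.
Qed.

Lemma span_x (K : fieldType) (R : algType K) (x y : R) : x * y = 1 -> jacobson_basis x y ->
  forall a : R, exists M (q : {poly K}), x ^+ M * a = peval q x.
Proof.
move=> h [hs _] a; have [n [c ->]] := hs a.
exists n, (\sum_(i < n) \sum_(j < n) c i j *: 'X^(n - i + j)).
rewrite peval_sum mulr_sumr; apply: eq_bigr => i _.
rewrite peval_sum mulr_sumr; apply: eq_bigr => j _.
rewrite peval_scale pevalXn -scalerAr mulrA xny ?(ltnW (ltn_ord i)) // -exprD.
done.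
Qed.

Lemma span_e (K : fieldType) (R : algType K) (x y : R) : x * y = 1 -> jacobson_basis x y ->
  forall t : R, exists q : {poly K}, eJ x y * t = eJ x y * peval q x.
Proof.
move=> h [hs _] t; have [n [c ->]] := hs t.
exists (\sum_(i < n) \sum_(j < n) (if (i : nat) == 0%N then c i j else 0) *: 'X^j).
rewrite peval_sum !mulr_sumr; apply: eq_bigr => i _.
rewrite peval_sum !mulr_sumr; apply: eq_bigr => j _.
rewrite peval_scale pevalXn -!scalerAr.
case: i => -[|i] hi /=; first by rewrite expr0 mul1r.
by rewrite mulrA (eyn _ h) mul0r scaler0 scale0r.
Qed.

Lemma poly_span (K : fieldType) d (U : {poly K} -> Prop) :
  (forall u v, U u -> U v -> U (u + v)) -> (forall c u, U u -> U (c *: u)) ->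
  (forall u, U u -> (size u <= d)%N) ->
  exists n (g : 'I_n -> {poly K}), (forall i, U (g i)) /\
    forall u, U u -> exists c : 'I_n -> K, u = \sum_(i < n) c i *: g i.
Proof.
elim: d U => [|d IH] U hadd hsc hsz.
  exists 0%N, (fun _ => 0); split; first by case.
  move=> u hu; exists (fun _ => 0); rewrite big_ord0; apply/eqP.
  by rewrite -size_poly_eq0 -leqn0 hsz.
have [n [g [hg hspan]]] : exists n (g : 'I_n -> {poly K}),
    (forall i, U (g i) /\ (size (g i) <= d)%N) /\
    forall u, U u /\ (size u <= d)%N -> exists c : 'I_n -> K, u = \sum_(i < n) c i *: g i.
  apply: IH.
  - move=> u v [hu1 hu2] [hv1 hv2]; split; first exact: hadd.
    by apply: leq_trans (size_polyD u v) _; rewrite geq_max hu2 hv2.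
  - move=> c u [hu1 hu2]; split; first exact: hsc.
    exact: leq_trans (size_scale_leq c u) hu2.
  - by move=> u [].
case: (classic (exists u0, U u0 /\ ~~ (size u0 <= d)%N)) => [[u0 [hu0 hs0]]|hno]; last first.
  exists n, g; split; first by move=> i; exact: (hg i).1.
  move=> u hu; apply: hspan; split => //.
  by case: (boolP (size u <= d)%N) => // hb; exfalso; apply: hno; exists u.
have hsz0 : size u0 = d.+1.
  by apply/eqP; rewrite eqn_leq hsz //= ltnNge.
have hl : u0`_d != 0.
  have : lead_coef u0 != 0.
    by rewrite lead_coef_eq0 -size_poly_eq0 hsz0.
  by rewrite lead_coefE hsz0.
exists n.+1, (fun i => if unlift ord0 i is Some j then g j else u0); split.
  by move=> i; case: unlift => [j|]; [exact: (hg j).1 | exact: hu0].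
move=> u hu.
set a := u`_d / u0`_d.
have hv : U (u - a *: u0) /\ leq (size (u - a *: u0)) d.
  split; first by rewrite -scaleNr; apply: hadd => //; apply: hsc.
  apply/leq_sizeP => j; rewrite leq_eqVlt => /orP [/eqP <-|hj].
    by rewrite coefB coefZ /a divfK // subrr.
  have /leq_sizeP h1 := hsz u hu; have /leq_sizeP h2 := hsz u0 hu0.
  by rewrite coefB coefZ h1 // h2 // mulr0 subr0.
have [c hc] := hspan _ hv.
exists (fun i => if unlift ord0 i is Some j then c j else a).
rewrite big_ord_recl unlift_none.
under eq_bigr do rewrite liftK.
by rewrite -hc addrC subrK.
Qed.

Lemma li_scale (K : fieldType) (R : algType K) (L : R -> Prop) c a :
  is_left_ideal L -> L a -> L (c *: a).
Proof. by move=> [_ [_ hm]] ha; rewrite -mulr_algl; apply: hm. Qed.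

Lemma li_opp (K : fieldType) (R : algType K) (L : R -> Prop) a :
  is_left_ideal L -> L a -> L (- a).
Proof. by move=> [_ [_ hm]] ha; rewrite -mulN1r; apply: hm. Qed.

Lemma li_sub (K : fieldType) (R : algType K) (L : R -> Prop) a b :
  is_left_ideal L -> L a -> L b -> L (a - b).
Proof. by move=> hL ha hb; case: (hL) => [_ [hd _]]; apply: hd => //; apply: li_opp. Qed.

Lemma li_sum (K : fieldType) (R : algType K) (L : R -> Prop) n (F : 'I_n -> R) :
  is_left_ideal L -> (forall i, L (F i)) -> L (\sum_(i < n) F i).
Proof.
move=> [h0 [hd hm]] hF; elim/big_ind: _ => //.
Qed.

Definition Sp (K : fieldType) (R : algType K) n (g : 'I_n -> R) : R -> Prop :=
  fun m => exists c : 'I_n -> R, m = \sum_(i < n) c i * g i.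

Lemma Sp_ideal (K : fieldType) (R : algType K) n (g : 'I_n -> R) : is_left_ideal (Sp g).
Proof.
split; first by exists (fun _ => 0); rewrite big1 // => i _; rewrite mul0r.
split.
  move=> a b [ca ->] [cb ->]; exists (fun i => ca i + cb i).
  by rewrite -big_split /=; apply: eq_bigr => i _; rewrite mulrDl.
move=> r a [ca ->]; exists (fun i => r * ca i).
by rewrite mulr_sumr; apply: eq_bigr => i _; rewrite mulrA.
Qed.

Lemma Sp_gen (K : fieldType) (R : algType K) n (g : 'I_n -> R) i : Sp g (g i).
Proof.
exists (fun j => if j == i then 1 else 0).
rewrite (bigD1 i) //= eqxx mul1r big1 ?addr0 // => j /negbTE ->; by rewrite mul0r.
Qed.

Definition gjoin (T : Type) n1 n2 (g1 : 'I_n1 -> T) (g2 : 'I_n2 -> T) : 'I_(n1 + n2) -> T :=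
  fun i => match split i with inl j => g1 j | inr j => g2 j end.

Arguments gjoin : simpl never.

Lemma gjoin_l (T : Type) n1 n2 (g1 : 'I_n1 -> T) (g2 : 'I_n2 -> T) i :
  gjoin g1 g2 (lshift n2 i) = g1 i.
Proof. by rewrite /gjoin (unsplitK (inl i)). Qed.

Lemma gjoin_r (T : Type) n1 n2 (g1 : 'I_n1 -> T) (g2 : 'I_n2 -> T) i :
  gjoin g1 g2 (rshift n1 i) = g2 i.
Proof. by rewrite /gjoin (unsplitK (inr i)). Qed.

Lemma Sp_joinl (K : fieldType) (R : algType K) n1 n2 (g1 : 'I_n1 -> R) (g2 : 'I_n2 -> R) m :
  Sp g1 m -> Sp (gjoin g1 g2) m.
Proof.
move=> [c ->]; exists (gjoin c (fun _ => 0)).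
rewrite big_split_ord /= [X in _ + X]big1 ?addr0 => [|i _]; last by rewrite !gjoin_r mul0r.
by apply: eq_bigr => i _; rewrite !gjoin_l.
Qed.

Lemma Sp_joinr (K : fieldType) (R : algType K) n1 n2 (g1 : 'I_n1 -> R) (g2 : 'I_n2 -> R) m :
  Sp g2 m -> Sp (gjoin g1 g2) m.
Proof.
move=> [c ->]; exists (gjoin (fun _ => 0) c).
rewrite big_split_ord /= [X in X + _]big1 ?add0r => [|i _]; last by rewrite !gjoin_l mul0r.
by apply: eq_bigr => i _; rewrite !gjoin_r.
Qed.

Lemma fin_gen_Sp (K : fieldType) (R : algType K) (L : R -> Prop) n (g : 'I_n -> R) :
  (forall i, L (g i)) -> (forall m, L m -> Sp g m) -> fin_gen L.
Proof. by move=> h1 h2; exists n, g; split. Qed.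

Lemma fg_poly (K : fieldType) (R : algType K) (x y : R) : x * y = 1 -> jacobson_basis x y ->
  forall (L : R -> Prop) (p : {poly K}), is_left_ideal L -> p != 0 ->
  L (peval p x) -> fin_gen L.
Proof.
move=> h hb L p hL hp hLp.
have [hL0 [hLd hLm]] := hL.
have hsz : forall r, (size (r %% p)%R < size p)%N by move=> r; rewrite ltn_modp.
have := @poly_span K (size p) (fun r => L (peval r x) /\ (size r < size p)%N).
move=> PS1.
pose U1 := (fun r => L (peval r x) /\ (size r < size p)%N).
have Ha1 : forall u v, U1 u -> U1 v -> U1 (u + v).
  move=> u v [hu1 hu2] [hv1 hv2]; split; first by rewrite peval_add; apply: (hLd).
  by apply: leq_ltn_trans (size_polyD u v) _; rewrite gtn_max hu2 hv2.
have Hb1 : forall c u, U1 u -> U1 (c *: u).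
  move=> c u [hu1 hu2]; split; first by rewrite peval_scale; apply: li_scale.
  exact: leq_ltn_trans (size_scale_leq c u) hu2.
have Hc1 : forall u, U1 u -> (size u <= size p)%N by move=> u [_ /ltnW].
have [n1 [g1 [hg1 hs1]]] := PS1 Ha1 Hb1 Hc1.
have := @poly_span K (size p) (fun r => L (eJ x y * peval r x) /\ (size r < size p)%N).
move=> PS2.
pose U2 := (fun r => L (eJ x y * peval r x) /\ (size r < size p)%N).
have Ha2 : forall u v, U2 u -> U2 v -> U2 (u + v).
  move=> u v [hu1 hu2] [hv1 hv2]; split; first by rewrite peval_add mulrDr; apply: (hLd).
  by apply: leq_ltn_trans (size_polyD u v) _; rewrite gtn_max hu2 hv2.
have Hb2 : forall c u, U2 u -> U2 (c *: u).
  move=> c u [hu1 hu2]; split; first by rewrite peval_scale -scalerAr; apply: li_scale.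
  exact: leq_ltn_trans (size_scale_leq c u) hu2.
have Hc2 : forall u, U2 u -> (size u <= size p)%N by move=> u [_ /ltnW].
have [n2 [g2 [hg2 hs2]]] := PS2 Ha2 Hb2 Hc2.
pose G := gjoin (fun _ : 'I_1 => peval p x)
   (gjoin (fun i => peval (g1 i) x) (fun i => eJ x y * peval (g2 i) x)).
apply: (@fin_gen_Sp K R L _ G).
  move=> i; rewrite /G /gjoin; case: split => j //.
  by case: split => k; [exact: (hg1 k).1 | exact: (hg2 k).1].
move=> m hm.
have [SpI0 [SpId SpIm]] := Sp_ideal G.
have h1 : Sp G (peval p x) := Sp_joinl _ (Sp_gen (fun _ : 'I_1 => peval p x) ord0).
have hq : forall r, L (peval r x) -> Sp G (peval r x).
  move=> r hr.
  have hU : L (peval (r %% p) x) /\ (size (r %% p)%R < size p)%N.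
    split => //.
    have -> : peval (r %% p) x = peval r x - peval (r %/ p) x * peval p x.
      by rewrite {2}(divp_eq r p) peval_add peval_mul addrC addKr.
    by apply: li_sub => //; apply: (hLm).
  rewrite (divp_eq r p) peval_add peval_mul; apply: (SpId); first exact: SpIm.
  have [c ->] := hs1 _ hU; rewrite peval_sum; apply: li_sum; first exact: Sp_ideal.
  move=> i; rewrite peval_scale -mulr_algl; apply: (SpIm).
  by apply: Sp_joinr; apply: Sp_joinl; apply: Sp_gen.
have he : forall r, L (eJ x y * peval r x) -> Sp G (eJ x y * peval r x).
  move=> r hr.
  have hU : L (eJ x y * peval (r %% p) x) /\ (size (r %% p)%R < size p)%N.
    split => //.
    have -> : eJ x y * peval (r %% p) x
       = eJ x y * peval r x - (eJ x y * peval (r %/ p) x) * peval p x.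
      by rewrite {2}(divp_eq r p) peval_add peval_mul mulrDr mulrA addrC addKr.
    by apply: li_sub => //; apply: (hLm).
  rewrite (divp_eq r p) peval_add peval_mul mulrDr mulrA; apply: (SpId); first exact: SpIm.
  have [c ->] := hs2 _ hU; rewrite peval_sum mulr_sumr; apply: li_sum; first exact: Sp_ideal.
  move=> i; rewrite peval_scale -scalerAr -mulr_algl; apply: (SpIm).
  by apply: Sp_joinr; apply: Sp_joinr; apply: Sp_gen.
have [M [q hMq]] := span_x h hb m.
rewrite (decomp M m h); apply: (SpId).
  by apply: (SpIm); rewrite hMq; apply: (hq); rewrite -hMq; apply: (hLm).
apply: li_sum; first exact: Sp_ideal.
move=> i; apply: (SpIm).
have [qi hqi] := span_e h hb (x ^+ i * m).
by rewrite hqi; apply: (he); rewrite -hqi; apply: (hLm); apply: (hLm).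
Qed.

Lemma principal_ideal (K : fieldType) (R : algType K) (u : R) : is_left_ideal (principal u).
Proof.
split; first by exists 0; rewrite mul0r.
split; first by move=> a b [ra ->] [rb ->]; exists (ra + rb); rewrite mulrDl.
by move=> r a [ra ->]; exists (r * ra); rewrite mulrA.
Qed.

Lemma simple_e (K : fieldType) (R : algType K) (x y : R) : x * y = 1 -> jacobson_basis x y ->
  forall t, eJ x y * t != 0 -> simple_lsub (principal (eJ x y * t)).
Proof.
move=> h hb t hu.
set u := eJ x y * t.
have eu : eJ x y * u = u by rewrite /u mulrA ee.
split; first exact: principal_ideal.
split; first by exists u; split; [exists 1; rewrite mul1r | exact/eqP].
move=> T hT hTs.
have [hT0 [hTd hTm]] := hT.
case: (classic (forall v, T v -> v = 0)) => [hz|hnz].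
  by left => a; split; [exact: hz | move=> ->].
right.
have [v [hv hv0]] : exists v, T v /\ v <> 0.
  apply: NNPP => hn; apply: hnz => v hv; apply: NNPP => hv0; apply: hn; by exists v.
have [r hr] := hTs v hv.
have [k hk] : exists k, eJ x y * (x ^+ k * v) <> 0.
  apply: NNPP => hn; apply: hv0.
  have hall : forall k, eJ x y * (x ^+ k * v) = 0.
    by move=> k; apply: NNPP => hk; apply: hn; exists k.
  have [M [q hMq]] := span_x h hb r.
  have hxM : x ^+ M * v = q`_0 *: u.
    by rewrite hr mulrA hMq /u mulrA peval_e // -scalerAl.
  have hxM' : x ^+ M * v = 0.
    by rewrite -(hall M) {2}hxM -scalerAr eu -hxM.
  rewrite (decomp M v h) hxM' mulr0 add0r big1 // => i _.
  by rewrite hall mulr0.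
have [q' hq'] := span_e h hb (x ^+ k * r).
have hek : eJ x y * (x ^+ k * v) = q'`_0 *: u.
  rewrite hr [x ^+ k * (r * u)]mulrA [eJ x y * (_ * u)]mulrA hq' /u.
  by rewrite mulrA -(mulrA (eJ x y) (peval q' x)) peval_e // -scalerAr -scalerAl ee.
have hq0 : q'`_0 != 0.
  by apply/eqP => hq0; apply: hk; rewrite hek hq0 scale0r.
have Tu : T u.
  have -> : u = (q'`_0)^-1 *: (eJ x y * (x ^+ k * v)).
    by rewrite hek scalerA mulVf // scale1r.
  by apply: li_scale => //; apply: (hTm); apply: (hTm).
move=> a; split; first exact: hTs.
by move=> [ra ->]; apply: (hTm).
Qed.

Lemma principal_sub (K : fieldType) (R : algType K) (L : R -> Prop) a :
  is_left_ideal L -> L a -> subsetR (principal a) L.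
Proof. by move=> [_ [_ hm]] ha z [r ->]; apply: hm. Qed.

Lemma part2 (K : fieldType) (R : algType K) (x y : R) : x * y = 1 -> jacobson_basis x y ->
  forall L : R -> Prop, is_left_ideal L -> semisimple L \/ fin_gen L.
Proof.
move=> h hb L hL.
have [hL0 [hLd hLm]] := hL.
case: (classic (exists p : {poly K}, p != 0 /\ L (peval p x))) => [[p [hp hLp]]|hno].
  by right; apply: (fg_poly h hb hL hp hLp).
left => m hm.
have Lpoly : forall q, L (peval q x) -> peval q x = 0.
  move=> q hq; case: (eqVneq q 0) => [->|hq0]; first exact: peval0.
  by exfalso; apply: hno; exists q.
have [M [q hMq]] := span_x h hb m.
have hxM : x ^+ M * m = 0 by rewrite hMq; apply: Lpoly; rewrite -hMq; apply: (hLm).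
have hm' : m = \sum_(i < M) y ^+ i * (eJ x y * (x ^+ i * m)).
  by rewrite {1}(decomp M m h) hxM mulr0 add0r.
pose u := fun i : 'I_M => eJ x y * (x ^+ i * m).
have hLu : forall i, L (u i) by move=> i; apply: (hLm); apply: (hLm).
case: (classic (exists j : 'I_M, u j != 0)) => [[j hj]|hnz]; last first.
  exists 0%N, (fun _ => @zeroset K R), (fun _ => 0); split; first by case.
  rewrite big_ord0 hm' big1 // => i _.
  have hu0 : u i = 0 by apply/eqP; apply: NNPP => hne; apply: hnz; exists i; exact/negP.
  by rewrite /u in hu0; rewrite hu0 mulr0.
exists M, (fun i : 'I_M => principal (if u i != 0 then u i else u j)), (fun i : 'I_M => y ^+ i * u i).
split; last exact: hm'.
move=> i; split.
  by case: ifP => [hi|_]; [exact: (simple_e h hb hi) | exact: (simple_e h hb hj)].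
split; first by apply: principal_sub => //; case: ifP.
case: ifP => [_|/negbFE/eqP ->]; first by exists (y ^+ i).
by exists 0; rewrite mulr0 mul0r.
Qed.

Lemma nil_I (K : fieldType) (R : algType K) (x y : R) : x * y = 1 -> jacobson_basis x y ->
  forall s, idealI x y s -> exists N, x ^+ N * s = 0.
Proof.
move=> h hb s [n [a [b ->]]].
elim/big_ind: _.
- by exists 0%N; rewrite mulr0.
- move=> s1 s2 [N1 h1] [N2 h2]; exists (N1 + N2)%N.
  by rewrite mulrDr {1}addnC !exprD -!mulrA h1 h2 !mulr0 addr0.
- move=> i _; have [M [q hq]] := span_x h hb (a i).
  exists M.+1; rewrite exprS -mulrA [x ^+ M * _]mulrA [x ^+ M * _]mulrA hq peval_e //.
  by rewrite -scalerAl -scalerAr mulrA xe // mul0r scaler0.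
Qed.

Definition atomic (K : fieldType) (R : algType K) (a : R) : Prop :=
  forall T, is_left_ideal T -> subsetR T (principal a) ->
    eqsetR T (@zeroset K R) \/ eqsetR T (principal a).

Lemma zeroset_ideal (K : fieldType) (R : algType K) : is_left_ideal (@zeroset K R).
Proof.
split; first by [].
split; first by move=> a b -> ->; rewrite addr0.
by move=> r a ->; rewrite mulr0.
Qed.

Lemma fl_eq (K : fieldType) (R : algType K) (A B : R -> Prop) :
  finite_length A -> eqsetR A B -> finite_length B.
Proof.
move=> [n [C [h0 [hn [hi hs]]]]] hAB; exists n, C; split => //; split => //.
by move=> a; split => [/hn/hAB|/hAB/hn].
Qed.

Lemma Sp_rec (K : fieldType) (R : algType K) n (h : 'I_n.+1 -> R) m :
  Sp h m <-> exists a r, Sp (fun i => h (widen_ord (leqnSn n) i)) a /\ m = a + r * h ord_max.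
Proof.
split.
  move=> [c ->]; rewrite big_ord_recr /=.
  exists (\sum_(i < n) c (widen_ord (leqnSn n) i) * h (widen_ord (leqnSn n) i)), (c ord_max).
  by split => //; exists (fun i => c (widen_ord (leqnSn n) i)).
move=> [a [r [[c ->] ->]]].
exists (fun i => if unlift ord_max i is Some j then c j else r).
rewrite big_ord_recr /= unlift_none; congr (_ + _); apply: eq_bigr => i _.
have -> : widen_ord (leqnSn n) i = lift ord_max i by apply: val_inj => /=; symmetry; exact: lift_max.
by rewrite liftK.
Qed.

Lemma atomic0 (K : fieldType) (R : algType K) : atomic (0 : R).
Proof.
move=> T [hT0 _] hs; left => a; split => [/hs [r ->]|->] //; by rewrite mulr0.
Qed.

Lemma fl_Sp (K : fieldType) (R : algType K) n (h : 'I_n -> R) :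
  (forall i, atomic (h i)) -> finite_length (Sp h).
Proof.
elim: n h => [|n IH] h ha.
  exists 0%N, (fun _ => @zeroset K R); split; first by [].
  split; first by move=> a; split => [->|[c ->]]; [exists (fun _ => 0); rewrite big_ord0 | rewrite big_ord0].
  by split; [move=> _; exact: zeroset_ideal | by []].
pose h' := fun i => h (widen_ord (leqnSn n) i).
have [k [C [C0 [Ck [Ci Cs]]]]] := IH h' (fun i => ha _).
pose g := h ord_max.
have [SpI0 [SpId SpIm]] := Sp_ideal h.
have [SpI0' [SpId' SpIm']] := Sp_ideal h'.
have h'h : forall a, Sp h' a -> Sp h a.
  by move=> a ha'; apply/Sp_rec; exists a, 0; rewrite mul0r addr0.
case: (classic (Sp h' g)) => [hg|hg].
  apply: fl_eq (IH h' (fun i => ha _)) _ => a; split; first exact: h'h.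
  by move=> /Sp_rec [b [r [hb ->]]]; apply: (SpId'); last apply: (SpIm').
exists k.+1, (fun i => if (i <= k)%N then C i else Sp h).
split; first by rewrite leq0n.
split; first by rewrite ltnn.
split; first by move=> i; case: ifP => _; [exact: Ci | exact: Sp_ideal].
move=> i; rewrite ltnS => hi.
case: (eqVneq i k) => [->|hne]; last first.
  have hik : (i < k)%N by rewrite ltn_neqAle hne hi.
  by rewrite hi hik; exact: Cs.
  rewrite leqnn ltnn.
  split; first by move=> a /Ck /h'h.
  split.
    move=> heq; apply: hg; apply/Ck/heq; apply/Sp_rec.
    by exists 0, 1; split; [exists (fun _ => 0); rewrite big1 // => j _; rewrite mul0r | rewrite add0r mul1r].
  move=> T hT hCT hTS.
  have [hT0 [hTd hTm]] := hT.
  pose T' := fun z => T z /\ principal g z.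
  have hT' : is_left_ideal T'.
    have [p0 [pd pm]] := principal_ideal g.
    split; first by split.
    split; first by move=> a b [ha1 ha2] [hb1 hb2]; split; [apply: (hTd) | apply: pd].
    by move=> r a [ha1 ha2]; split; [apply: (hTm) | apply: pm].
  case: (ha ord_max T' hT' (fun z hz => hz.2)) => [hz|hfull].
    left => t; split; last exact: hCT.
    move=> hTt; have := hTS t hTt; move=> /Sp_rec [a [r [hsa ht]]].
    rewrite ht in hTt *.
    have hCa : C k a by apply/Ck.
    have hrg : r * g = 0.
      apply/(hz (r * g)); split; last by exists r.
      have -> : r * g = (a + r * g) - a by rewrite addrC addKr.
      by apply: li_sub; [exact: hT | exact: hTt | apply: hCT; exact: hCa].
    by rewrite /g in hrg; rewrite hrg addr0.
  right => t; split; first exact: hTS.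
  move=> /Sp_rec [a [r [hsa ->]]]; apply: (hTd); first by apply: hCT; apply/Ck.
  by have [] := (hfull (r * g)).2 (ex_intro _ r erefl).
Qed.

Lemma modp_lin (K : fieldType) n (c : 'I_n -> K) (r : 'I_n -> {poly K}) (p : {poly K}) :
  (\sum_(i < n) c i *: r i) %% p = \sum_(i < n) c i *: (r i %% p).
Proof.
apply: (big_ind2 (fun a b => a %% p = b)); first by rewrite mod0p.
  by move=> a1 a2 b1 b2 <- <-; rewrite modpD.
by move=> i _; rewrite modpZl.
Qed.

Lemma sumset_ideal (K : fieldType) (R : algType K) (A B : R -> Prop) :
  is_left_ideal A -> is_left_ideal B -> is_left_ideal (sumset A B).
Proof.
move=> [A0 [Ad Am]] [B0 [Bd Bm]].
split; first by exists 0, 0; rewrite addr0.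
split.
  move=> u v [a1 [b1 [ha1 [hb1 ->]]]] [a2 [b2 [ha2 [hb2 ->]]]].
  exists (a1 + a2), (b1 + b2); split; first exact: Ad.
  by split; [exact: Bd | rewrite addrACA].
move=> r u [a [b [ha [hb ->]]]]; exists (r * a), (r * b).
by split; [exact: Am | split; [exact: Bm | rewrite mulrDr]].
Qed.

Lemma part1_fl (K : fieldType) (R : algType K) (x y : R) : x * y = 1 -> jacobson_basis x y ->
  forall (Sigma : R -> Prop) (p : {poly K}),
     is_left_ideal Sigma -> subsetR Sigma (idealI x y) ->
     (forall h, Sigma h -> principal (peval p x) h -> h = 0) ->
     p != 0 -> finite_length Sigma.
Proof.
move=> h hb Sigma p hS hSI hdir hp.
have [S0 [Sd Sm]] := hS.
pose W := fun r => Sigma (eJ x y * peval r x).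
pose V := fun v => exists r, W r /\ v = r %% p.
have Va : forall u v, V u -> V v -> V (u + v).
  move=> u v [r1 [hr1 ->]] [r2 [hr2 ->]]; exists (r1 + r2); split; last by rewrite modpD.
  by rewrite /W peval_add mulrDr; apply: (Sd).
have Vb : forall c u, V u -> V (c *: u).
  move=> c u [r1 [hr1 ->]]; exists (c *: r1); split; last by rewrite modpZl.
  by rewrite /W peval_scale -scalerAr; apply: li_scale.
have Vc : forall u, V u -> (size u <= size p)%N.
  by move=> u [r [_ ->]]; apply: ltnW; rewrite ltn_modp.
have [n [g [hg hspan]]] := poly_span Va Vb Vc.
have [rr hrr] := fin_all_exists hg.
pose hh := fun i => eJ x y * peval (rr i) x.
have [SpI0 [SpId SpIm]] := Sp_ideal hh.
have key : forall w, W w -> Sp hh (eJ x y * peval w x).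
  move=> w hw.
  have [c hc] := hspan (w %% p) (ex_intro _ w (conj hw erefl)).
  pose z := w - \sum_(i < n) c i *: rr i.
  have hsum : eJ x y * peval (\sum_(i < n) c i *: rr i) x = \sum_(i < n) c i *: hh i.
    rewrite peval_sum mulr_sumr; apply: eq_bigr => i _.
    by rewrite peval_scale -scalerAr.
  have hz0 : z %% p = 0.
    rewrite /z modpD modpN modp_lin hc.
    have -> : \sum_(i < n) c i *: (rr i %% p) = \sum_(i < n) c i *: g i.
      by apply: eq_bigr => i _; rewrite (hrr i).2.
    by rewrite subrr.
  have hez : eJ x y * peval z x = 0.
    apply: hdir.
      rewrite /z peval_sub mulrBr hsum; apply: li_sub => //.
      by apply: li_sum => // i; apply: li_scale => //; exact: (hrr i).1.
    exists (eJ x y * peval (z %/ p) x).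
    by rewrite {1}(divp_eq z p) hz0 addr0 peval_mul mulrA.
  have -> : eJ x y * peval w x = eJ x y * peval z x + \sum_(i < n) c i *: hh i.
    by rewrite -hsum -mulrDr -peval_add /z subrK.
  rewrite hez add0r; apply: li_sum; first exact: Sp_ideal.
  move=> i; rewrite -mulr_algl; apply: (SpIm); exact: Sp_gen.
apply: (@fl_eq K R (Sp hh)).
  apply: fl_Sp => i.
  case: (eqVneq (hh i) 0) => [->|hne]; first exact: atomic0.
  exact: (simple_e h hb hne).2.2.
move=> m; split.
  move=> [c ->]; apply: li_sum => // i; apply: (Sm); exact: (hrr i).1.
move=> hm; have [N hN] := nil_I h hb (hSI m hm).
rewrite (decomp N m h) hN mulr0 add0r; apply: li_sum; first exact: Sp_ideal.
move=> i; apply: (SpIm).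
have [qi hqi] := span_e h hb (x ^+ i * m).
rewrite hqi; apply: key; rewrite /W -hqi; apply: (Sm); apply: (Sm); exact: hm.
Qed.

Unset Implicit Arguments.

Theorem corollary1 (K : fieldType) (R : algType K) (x y : R) :
  x * y = 1 -> jacobson_basis x y ->
  (forall (Sigma : R -> Prop) (p : {poly K}),
     is_left_ideal Sigma -> subsetR Sigma (idealI x y) ->
     (forall h, Sigma h -> principal (peval p x) h -> h = 0) ->
     p != 0 ->
     fin_gen (sumset Sigma (principal (peval p x))) /\ finite_length Sigma)
  /\ (forall L : R -> Prop, is_left_ideal L -> semisimple L \/ fin_gen L).
Proof.
move=> h hb; split; last by move=> L hL; exact: (part2 h hb hL).
move=> Sigma p hS hSI hdir hp; split; last exact: (part1_fl h hb hS hSI hdir hp).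
apply: (fg_poly h hb (p := p)) => //.
  by apply: sumset_ideal => //; exact: principal_ideal.
exists 0, (peval p x); split; first by case: hS.
by split; [exists 1; rewrite mul1r | rewrite add0r].
Qed.
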